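(* Let $C$ be a convex body in the plane accessible only through a separation oracle, and let $P$ be a set of $n$ points in the plane. The classification algorithm for reverse emptiness (described in the context) performs $O\bigl(|F_{\mathrm{in}}|\log n\bigr)$ oracle queries. The algorithm correctly verifies that $P\cap C=P$ or finds a witness point of $P$ outside $C$.
   Context: Separation oracle: given $q\in\mathbb{R}^2$, it either reports $q\in C$ or returns a line separating $q$ from $C$. The inner fence $F_{\mathrm{in}}$ of $P$ is a closed convex polygon with the minimum number of vertices such that $F_{\mathrm{in}}\subseteq C$ and $C\cap P=F_{\mathrm{in}}\cap P$; $|F_{\mathrm{in}}|$ denotes its number of vertices. Algorithm: let $D=\mathrm{CH}(P)$, let $v,v'\in P$ be the leftmost and rightmost vertices of $D$, and $v_1,v_2$ (resp. $v'_1,v'_2$) the vertices of $D$ adjacent to $v$ (resp. $v'$). Query these six points; if any is outside, halt and report it. Otherwise handle the points above the segment $vv'$ as follows (the points below are handled symmetrically). Let $D^+$ be the part of the boundary chain of $D$ above $vv'$ between the vertical lines through $v$ and $v'$, with edges $e_1,\dots,e_k$ in clockwise order from $v$ to $v'$; for $i<j$ let $D[i,j]$ be the chain of edges $e_i,\dots,e_j$. A recursive call $(i,j)$ (starting with $(1,k)$) must verify that the points of $P$ below $D[i,j]$ are in $C$: let $\ell_i,\ell_j$ be the lines through $e_i,e_j$ and $q=\ell_i\cap\ell_j$; query $q$. If $q\in C$, all points of $P$ below $D[i,j]$ are classified inside and the call returns. Otherwise let $m=\lfloor (i+j)/2\rfloor$ and $e_m=(x,y)$; query $x$ and $y$; if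 either is outside, report it as a witness; otherwise recurse on $(i,m)$ and $(m,j)$. *)

(* Defs.v *)
From HB Require Import structures.
From mathcomp Require Import all_boot all_order all_algebra.
From mathcomp Require Import all_classical all_reals all_analysis.
Set Implicit Arguments. Unset Strict Implicit. Unset Printing Implicit Defensive.
Import Order.TTheory GRing.Theory Num.Theory numFieldNormedType.Exports.
Local Open Scope ring_scope.
Local Open Scope classical_set_scope.

Section Geom.
Variable R : realType.
Notation pt := (R * R)%type.

Definition cross (u w : pt) : R := u.1 * w.2 - u.2 * w.1.
Definition vsub (a b : pt) : pt := (a.1 - b.1, a.2 - b.2).

(* orientation of (a,b,c): > 0 iff c is strictly to the left of the
   directed line a -> b (i.e. "above" it when b is to the right of a) *)
Definition orient (a b c : pt) : R := cross (vsub b a) (vsub c a).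

(* intersection point of the line through a,b and the line through c,d
   (only meaningful when the lines are not parallel) *)
Definition meet (a b c d : pt) : pt :=
  let t := cross (vsub c a) (vsub d c) / cross (vsub b a) (vsub d c) in
  (a.1 + t * (b.1 - a.1), a.2 + t * (b.2 - a.2)).

Definition lex_lt (p q : pt) : bool := (p.1 < q.1) || ((p.1 == q.1) && (p.2 < q.2)).

Definition conv (V : seq pt) : set pt := fun z =>
  exists w : nat -> R, (forall i, 0 <= w i) /\ (\sum_(i < size V) w i = 1) /\
    z = (\sum_(i < size V) w i * (nth (0, 0) V i).1,
         \sum_(i < size V) w i * (nth (0, 0) V i).2).

Definition convex_set (C : set pt) : Prop := forall x y t, C x -> C y ->
  0 <= t <= 1 -> C (t * x.1 + (1 - t) * y.1, t * x.2 + (1 - t) * y.2).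

Definition convex_body (C : set pt) : Prop :=
  [/\ convex_set C, compact C & C° !=set0].

(* separation oracle for C: None = "q is in C"; Some (a,b,c) = the line
   a x + b y = c strictly separating q from C *)
Definition sep_oracle (C : set pt) (O : pt -> option (R * R * R)) : Prop :=
  forall q, match O q with
  | None => C q
  | Some (a, b, c) => (a, b) != (0, 0) /\ c < a * q.1 + b * q.2 /\
                      (forall z, C z -> a * z.1 + b * z.2 <= c)
  end.

Definition hull_vertex (P : seq pt) (p : pt) : Prop :=
  p \in P /\ ~ conv [seq x <- P | x != p] p.

Definition lexmin_of (P : seq pt) (v : pt) : Prop :=
  v \in P /\ forall p, p \in P -> p != v -> lex_lt v p.
Definition lexmax_of (P : seq pt) (v : pt) : Prop :=
  v \in P /\ forall p, p \in P -> p != v -> lex_lt p v.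

Definition upper_chain (P : seq pt) (v v' : pt) (U : seq pt) : Prop :=
  sorted lex_lt U /\ forall p, p \in U <-> (hull_vertex P p /\ 0 <= orient v v' p).
Definition lower_chain (P : seq pt) (v v' : pt) (L : seq pt) : Prop :=
  sorted (fun p q => lex_lt q p) L /\
  forall p, p \in L <-> (hull_vertex P p /\ orient v v' p <= 0).

Definition inner_fence (C : set pt) (P : seq pt) (V : seq pt) : Prop :=
  conv V `<=` C /\ (forall p, p \in P -> (conv V p <-> C p)).

Definition inner_fence_size (C : set pt) (P : seq pt) (k : nat) : Prop :=
  (exists V, inner_fence C P V /\ size V = k) /\
  (forall V, inner_fence C P V -> (k <= size V)%N).

Inductive outcome := AllIn | Witness of pt | Stuck.

Definition mem_of (O : pt -> option (R * R * R)) (q : pt) : bool :=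
  if O q is None then true else false.

(* Recursive call (i,j) on the chain W = [w_0; ...; w_k] whose edges are
   e_i = (w_(i-1), w_i), i = 1..k.  Returns the outcome together with the
   list of points queried (in order).  [fuel] only ensures termination;
   running out of fuel yields [Stuck]. *)
Fixpoint verify (fuel : nat) (O : pt -> option (R * R * R)) (W : seq pt)
    (i j : nat) : outcome * seq pt :=
  match fuel with
  | 0 => (Stuck, [::])
  | fuel'.+1 =>
    if (j <= i)%N then (AllIn, [::]) else
    let w n := nth (0, 0) W n in
    let q := meet (w i.-1) (w i) (w j.-1) (w j) in
    if mem_of O q then (AllIn, [:: q]) else
    let m := (i + j)./2 in
    let x := w m.-1 in let y := w m in
    if ~~ mem_of O x then (Witness x, [:: q; x]) else
    if ~~ mem_of O y then (Witness y, [:: q; x; y]) else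
    let (r1, Q1) := verify fuel' O W i m in
    match r1 with
    | AllIn => let (r2, Q2) := verify fuel' O W m j in (r2, [:: q; x; y] ++ Q1 ++ Q2)
    | _ => (r1, [:: q; x; y] ++ Q1)
    end
  end.

Definition verify_chain (O : pt -> option (R * R * R)) (W : seq pt) :=
  verify (size W) O W 1 (size W).-1.

Fixpoint check_list (O : pt -> option (R * R * R)) (s : seq pt) : option pt * seq pt :=
  match s with
  | [::] => (None, [::])
  | q :: s' => if mem_of O q then let (r, Q) := check_list O s' in (r, q :: Q)
               else (Some q, [:: q])
  end.

Definition classify (O : pt -> option (R * R * R)) (v v' : pt) (U L : seq pt)
  : outcome * seq pt :=
  let six := [:: v; nth v U 1; nth v L (size L).-2;
                 v'; nth v U (size U).-2; nth v L 1] in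
  let (r0, Q0) := check_list O six in
  match r0 with
  | Some p => (Witness p, Q0)
  | None =>
    let (r1, Q1) := verify_chain O U in
    match r1 with
    | AllIn => let (r2, Q2) := verify_chain O L in (r2, Q0 ++ Q1 ++ Q2)
    | _ => (r1, Q0 ++ Q1)
    end
  end.

End Geom.

Arguments AllIn {R}.
Arguments Stuck {R}.
Arguments Witness {R} _.

(* Main.v *)
From Pilot Require Import Defs.
Set Implicit Arguments. Unset Strict Implicit. Unset Printing Implicit Defensive.
From HB Require Import structures.
From mathcomp Require Import all_boot all_order all_algebra.
From mathcomp Require Import all_classical all_reals all_analysis.
From mathcomp Require Import ring lra zify.
Import Order.TTheory GRing.Theory Num.Theory.
Local Open Scope ring_scope.
Local Open Scope classical_set_scope.
Local Notation conv := Pilot.Defs.conv.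
Local Notation convex_set := Pilot.Defs.convex_set.
Section S1.
Variable R : realType.
Local Notation pt := (R * R)%type.

Lemma crossE (u w : pt) : cross u w = u.1*w.2 - u.2*w.1. Proof. by []. Qed.
Lemma orientE (a b c : pt) : orient a b c = (b.1-a.1)*(c.2-a.2) - (b.2-a.2)*(c.1-a.1).
Proof. by []. Qed.

Lemma sum_delta1 (n k : nat) (c : R) : (k < n)%N ->
  \sum_(i < n) c * (i == k :> nat)%:R = c.
Proof.
move=> hk; rewrite (bigD1 (Ordinal hk)) //= eqxx mulr1 big1 ?addr0 //.
by move=> i; rewrite -val_eqE /= => /negPf ->; rewrite mulr0.
Qed.

Lemma sum_delta (n k : nat) (c : R) (F : nat -> R) : (k < n)%N ->
  \sum_(i < n) c * (i == k :> nat)%:R * F i = c * F k.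
Proof.
move=> hk; rewrite (bigD1 (Ordinal hk)) //= eqxx mulr1 big1 ?addr0 //.
by move=> i; rewrite -val_eqE /= => /negPf ->; rewrite mulr0 mul0r.
Qed.

Lemma aff_sum (V : seq pt) (w : nat -> R) (z : pt) (a b c : R) :
  \sum_(i < size V) w i = 1 ->
  z = (\sum_(i < size V) w i * (nth (0, 0) V i).1,
       \sum_(i < size V) w i * (nth (0, 0) V i).2) ->
  a*z.1 + b*z.2 + c = \sum_(i < size V) w i * (a*(nth (0,0) V i).1 + b*(nth (0,0) V i).2 + c).
Proof.
move=> w1 -> /=.
rewrite {1}(_ : c = \sum_(i < size V) w i * c); last by rewrite -mulr_suml w1 mul1r.
rewrite !mulr_sumr -!big_split /=; apply: eq_bigr => i _; ring.
Qed.

Lemma conv_aff_ge0 (V : seq pt) z (a b c : R) : conv V z ->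
  (forall x, x \in V -> 0 <= a*x.1 + b*x.2 + c) -> 0 <= a*z.1 + b*z.2 + c.
Proof.
move=> [w [w0 [w1 hz]]] H; rewrite (aff_sum a b c w1 hz).
apply: sumr_ge0 => i _; apply: mulr_ge0 => //; apply: H; exact: mem_nth.
Qed.

Lemma orient_aff (a b z : pt) : orient a b z =
  (-(b.2-a.2))*z.1 + (b.1-a.1)*z.2 + ((b.2-a.2)*a.1 - (b.1-a.1)*a.2).
Proof. rewrite orientE; ring. Qed.

Lemma conv_orient_ge0 (V : seq pt) a b z : conv V z ->
  (forall x, x \in V -> 0 <= orient a b x) -> 0 <= orient a b z.
Proof.
move=> hc H; rewrite orient_aff; apply: (conv_aff_ge0 hc) => x /H.
by rewrite orient_aff.
Qed.

Lemma orient_swap (a b x : pt) : orient b a x = - orient a b x.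
Proof. rewrite !orientE; ring. Qed.

Lemma conv_orient_le0 (V : seq pt) a b z : conv V z ->
  (forall x, x \in V -> orient a b x <= 0) -> orient a b z <= 0.
Proof.
move=> hc H; rewrite -oppr_ge0 -orient_swap; apply: (conv_orient_ge0 hc) => x /H h.
by rewrite orient_swap oppr_ge0.
Qed.

Lemma mem_conv (V : seq pt) x : x \in V -> conv V x.
Proof.
move=> hx; exists (fun i => 1 * (i == index x V)%:R).
have hk : (index x V < size V)%N by rewrite index_mem.
split; first by move=> i; rewrite mul1r ler0n.
split; first by rewrite sum_delta1.
rewrite !(sum_delta _ (fun i => (nth (0,0) V i).1)) //.
rewrite !(sum_delta _ (fun i => (nth (0,0) V i).2)) //.
by rewrite nth_index // !mul1r; case: x {hx hk}.
Qed.

Lemma conv4 (L : seq pt) (z pa pb pc pd : pt) (c1 c2 c3 c4 : R) :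
  pa \in L -> pb \in L -> pc \in L -> pd \in L ->
  0 <= c1 -> 0 <= c2 -> 0 <= c3 -> 0 <= c4 -> c1 + c2 + c3 + c4 = 1 ->
  z = (c1*pa.1 + c2*pb.1 + c3*pc.1 + c4*pd.1, c1*pa.2 + c2*pb.2 + c3*pc.2 + c4*pd.2) ->
  conv L z.
Proof.
move=> h1 h2 h3 h4 g1 g2 g3 g4 hs ->.
exists (fun i => c1 * (i == index pa L)%:R + c2 * (i == index pb L)%:R
               + c3 * (i == index pc L)%:R + c4 * (i == index pd L)%:R).
have k1 : (index pa L < size L)%N by rewrite index_mem.
have k2 : (index pb L < size L)%N by rewrite index_mem.
have k3 : (index pc L < size L)%N by rewrite index_mem.
have k4 : (index pd L < size L)%N by rewrite index_mem.
split; first by move=> i; rewrite !addr_ge0 // mulr_ge0 // ler0n.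
split; first by rewrite !big_split /= !sum_delta1.
have E : forall F : nat -> R, \sum_(i < size L) (c1 * (i == index pa L :> nat)%:R + c2 * (i == index pb L :> nat)%:R
               + c3 * (i == index pc L :> nat)%:R + c4 * (i == index pd L :> nat)%:R) * F i =
   c1 * F (index pa L) + c2 * F (index pb L) + c3 * F (index pc L) + c4 * F (index pd L).
  move=> F; under eq_bigr => i _ do rewrite !mulrDl.
  by rewrite !big_split /= !(sum_delta _ F).
rewrite /=; by rewrite (E (fun i => (nth (0,0) L i).1)) (E (fun i => (nth (0,0) L i).2)) /= !nth_index.
Qed.

Lemma lex_extreme (L : seq pt) z (a b a' b' : R) :
  (forall x, x \in L -> a*x.1 + b*x.2 < a*z.1 + b*z.2 \/
      (a*x.1 + b*x.2 = a*z.1 + b*z.2 /\ a'*x.1 + b'*x.2 < a'*z.1 + b'*z.2)) ->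
  ~ conv L z.
Proof.
move=> H [w [w0 [w1 hz]]].
set n := size L.
pose X i := nth (0,0) L i.
have e1 := aff_sum (-a) (-b) (a*z.1 + b*z.2) w1 hz.
have t1 : forall i : 'I_n, true -> 0 <= w i * (- a * (X i).1 + - b * (X i).2 + (a * z.1 + b * z.2)).
  move=> i _; apply: mulr_ge0 => //.
  have -> : - a * (X i).1 + - b * (X i).2 + (a * z.1 + b * z.2) =
     (a * z.1 + b * z.2) - (a * (X i).1 + b * (X i).2) by ring.
  rewrite subr_ge0; have := H (X i) (mem_nth _ (ltn_ord i)).
  by move=> -[/ltW|[-> _]].
have s1 : \sum_(i < n) w i * (- a * (X i).1 + - b * (X i).2 + (a * z.1 + b * z.2)) = 0.
  by rewrite -e1; ring.
have z1 := psumr_eq0P t1 s1.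
have e2 := aff_sum (-a') (-b') (a'*z.1 + b'*z.2) w1 hz.
have t2 : forall i : 'I_n, true -> 0 <= w i * (- a' * (X i).1 + - b' * (X i).2 + (a' * z.1 + b' * z.2)).
  move=> i _; have := z1 i isT.
  have [->|wn0] := eqVneq (w i) 0; first by rewrite !mul0r.
  move/eqP; rewrite mulf_eq0 (negPf wn0) /= => /eqP he.
  apply: mulr_ge0 => //.
  have := H (X i) (mem_nth _ (ltn_ord i)).
  have -> : - a' * (X i).1 + - b' * (X i).2 + (a' * z.1 + b' * z.2) =
     (a' * z.1 + b' * z.2) - (a' * (X i).1 + b' * (X i).2) by ring.
  rewrite subr_ge0 => -[hl|[_ /ltW //]].
  exfalso; move: he hl.
  have -> : - a * (X i).1 + - b * (X i).2 + (a * z.1 + b * z.2) =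
     (a * z.1 + b * z.2) - (a * (X i).1 + b * (X i).2) by ring.
  by move/eqP; rewrite subr_eq0 => /eqP ->; rewrite ltxx.
have s2 : \sum_(i < n) w i * (- a' * (X i).1 + - b' * (X i).2 + (a' * z.1 + b' * z.2)) = 0.
  by rewrite -e2; ring.
have z2 := psumr_eq0P t2 s2.
have : \sum_(i < n) w i = 0.
  apply: big1 => i _.
  have [//|wn0] := eqVneq (w i) 0.
  have := z1 i isT; move/eqP; rewrite mulf_eq0 (negPf wn0) /= => /eqP he.
  have := z2 i isT; move/eqP; rewrite mulf_eq0 (negPf wn0) /= => /eqP he2.
  exfalso.
  have := H (X i) (mem_nth _ (ltn_ord i)).
  move: he he2.
  have -> : forall a b (x : pt), - a * x.1 + - b * x.2 + (a * z.1 + b * z.2) =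
     (a * z.1 + b * z.2) - (a * x.1 + b * x.2) by move=> *; ring.
  have -> : forall a b (x : pt), - a * x.1 + - b * x.2 + (a * z.1 + b * z.2) =
     (a * z.1 + b * z.2) - (a * x.1 + b * x.2) by move=> *; ring.
  move=> /eqP; rewrite subr_eq0 => /eqP <- /eqP; rewrite subr_eq0 => /eqP <-.
  by rewrite !ltxx => -[|[]].
by rewrite w1 => /eqP; rewrite oner_eq0.
Qed.

Lemma argmax_seq (T : eqType) (f : T -> R) (s : seq T) : s != [::] ->
  exists2 x, x \in s & forall y, y \in s -> f y <= f x.
Proof.
elim: s => // x s IH _.
case: s IH => [|y s] IH.
  by exists x; rewrite ?mem_seq1 // => y; rewrite mem_seq1 => /eqP ->.
have [m hm hmax] := IH isT.
have [le|lt] := leP (f m) (f x).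
  exists x; first by rewrite mem_head.
  move=> z; rewrite in_cons => /orP[/eqP->//|/hmax]; move=> h; exact: le_trans h le.
exists m; first by rewrite in_cons hm orbT.
move=> z; rewrite in_cons => /orP[/eqP->|/hmax //]; exact: ltW.
Qed.

End S1.
Section S2.
Variable R : realType.
Local Notation pt := (R * R)%type.

Definition wp (W : seq pt) n := nth (0,0) W n.
Definition dd (W : seq pt) s := vsub (wp W s) (wp W s.-1).
Definition negp (p : pt) : pt := (- p.1, - p.2).

Definition chain_ok (W : seq pt) : Prop :=
 (forall p q r, (p < q)%N -> (q < r)%N -> (r < size W)%N ->
     orient (wp W p) (wp W q) (wp W r) < 0) /\
 (forall s t, (0 < s)%N -> (s < t)%N -> (t < size W)%N -> cross (dd W s) (dd W t) < 0).

Lemma lex_ltP (p q : pt) : lex_lt p q -> p.1 < q.1 \/ (p.1 = q.1 /\ p.2 < q.2).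
Proof. by rewrite /lex_lt => /orP[h|/andP[/eqP e h]]; [left|right]. Qed.

Lemma lex_lt_le (p q : pt) : lex_lt p q -> p.1 <= q.1 /\ (p.1 = q.1 -> p.2 < q.2).
Proof.
move/lex_ltP => [h|[e h]]; split => //; [exact: ltW| move=> e; move: h; rewrite e ltxx//|].
by rewrite e.
Qed.

Lemma lex_lt_irr (p : pt) : lex_lt p p = false.
Proof. by rewrite /lex_lt ltxx eqxx ltxx. Qed.

Lemma lex_lt_trans : transitive (@lex_lt R).
Proof.
move=> q p r /lex_ltP h1 /lex_ltP h2; apply/orP.
case: h1 => [h1|[e1 h1]]; case: h2 => [h2|[e2 h2]].
- by left; exact: lt_trans h1 h2.
- by left; rewrite -e2.
- by left; rewrite e1.
- by right; rewrite e1 e2 eqxx /=; exact: lt_trans h1 h2.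
Qed.

Lemma lex_lt_neq (p q : pt) : lex_lt p q -> p != q.
Proof. by apply: contraTneq => ->; rewrite lex_lt_irr. Qed.

Lemma sorted_lex (U : seq pt) i j : sorted (@lex_lt R) U -> (i < j)%N -> (j < size U)%N ->
  lex_lt (wp U i) (wp U j).
Proof.
move=> hs hij hj; apply: (sorted_ltn_nth lex_lt_trans) => //.
by rewrite inE (ltn_trans hij hj).
Qed.

Lemma sorted_lex_rev (U : seq pt) i j :
  sorted (fun p q => @lex_lt R q p) U -> (i < j)%N -> (j < size U)%N ->
  lex_lt (wp U j) (wp U i).
Proof.
move=> hs hij hj.
have tr : transitive (fun p q : pt => lex_lt q p).
  by move=> x y z h1 h2; exact: lex_lt_trans h2 h1.
apply: (sorted_ltn_nth tr) => //.
by rewrite inE (ltn_trans hij hj).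
Qed.

Lemma lexmin_hull (P : seq pt) v : lexmin_of P v -> hull_vertex P v.
Proof.
move=> [vP H]; split => //.
apply: (@lex_extreme R _ _ (-1) 0 0 (-1)) => x.
rewrite mem_filter => /andP[xv xP].
move/lex_ltP: (H x xP xv) => [h|[e h]]; [left|right]; last split.
- by rewrite !mul0r !addr0 !mulN1r ltrN2.
- by rewrite e !mul0r.
- by rewrite !mul0r !add0r !mulN1r ltrN2.
Qed.

Lemma lexmax_hull (P : seq pt) v : lexmax_of P v -> hull_vertex P v.
Proof.
move=> [vP H]; split => //.
apply: (@lex_extreme R _ _ 1 0 0 1) => x.
rewrite mem_filter => /andP[xv xP].
move/lex_ltP: (H x xP xv) => [h|[e h]]; [left|right]; last split.
- by rewrite !mul0r !addr0 !mul1r.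
- by rewrite e !mul0r.
- by rewrite !mul0r !add0r !mul1r.
Qed.

Lemma core4 (P0 Q R0 V0 V1 : pt) :
  V0.1 <= P0.1 -> P0.1 <= Q.1 -> Q.1 <= R0.1 -> R0.1 <= V1.1 ->
  (P0.1 = R0.1 -> P0.2 <= Q.2 /\ Q.2 <= R0.2) ->
  0 <= orient V0 V1 Q -> 0 <= orient P0 Q R0 ->
  exists c1 c2 c3 c4 : R, [/\ 0 <= c1, 0 <= c2, 0 <= c3 & 0 <= c4] /\ c1 + c2 + c3 + c4 = 1 /\
     Q = (c1*P0.1 + c2*R0.1 + c3*V0.1 + c4*V1.1, c1*P0.2 + c2*R0.2 + c3*V0.2 + c4*V1.2).
Proof.
move=> h1 h2 h3 h4 hv o1 o2.
have [e|ne] := eqVneq P0.1 R0.1.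
  have [q2a q2b] := hv e.
  have eq1 : Q.1 = P0.1 by apply/eqP; rewrite eq_le h2 e h3.
  have [e2|ne2] := eqVneq P0.2 R0.2.
    exists 1, 0, 0, 0; split; first by split.
    split; first by rewrite !addr0.
    have eq2 : Q.2 = P0.2 by apply/eqP; rewrite eq_le q2a e2 q2b.
    by rewrite [LHS]surjective_pairing eq1 eq2; congr (_,_); ring.
  have d0 : 0 < R0.2 - P0.2 by rewrite subr_gt0 lt_def eq_sym ne2 (le_trans q2a q2b).
  set l := (Q.2 - P0.2) / (R0.2 - P0.2).
  have hl : l * (R0.2 - P0.2) = Q.2 - P0.2 by rewrite /l divfK // gt_eqF.
  have l0 : 0 <= l by apply: divr_ge0; [rewrite subr_ge0 | exact: ltW].
  have l1 : l <= 1 by rewrite /l ler_pdivrMr // mul1r lerD2r.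
  exists (1 - l), l, 0, 0; split; first by split; rewrite ?subr_ge0.
  split; first by ring.
  rewrite [LHS]surjective_pairing; congr (_,_); first by rewrite eq1 -e; ring.
  transitivity (l * (R0.2 - P0.2) + P0.2); first by rewrite hl; ring.
  by ring.
have d1 : 0 < R0.1 - P0.1 by rewrite subr_gt0 lt_def eq_sym ne (le_trans h2 h3).
have d2 : 0 < V1.1 - V0.1 by apply: lt_le_trans d1 _; rewrite lerB.
set l := (Q.1 - P0.1) / (R0.1 - P0.1).
have hl : l * (R0.1 - P0.1) = Q.1 - P0.1 by rewrite /l divfK // gt_eqF.
have l0 : 0 <= l by apply: divr_ge0; [rewrite subr_ge0 | exact: ltW].
have l1 : l <= 1 by rewrite /l ler_pdivrMr // mul1r lerD2r.
set m := (Q.1 - V0.1) / (V1.1 - V0.1).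
have hm : m * (V1.1 - V0.1) = Q.1 - V0.1 by rewrite /m divfK // gt_eqF.
have m0 : 0 <= m by apply: divr_ge0; [rewrite subr_ge0 (le_trans h1 h2) | exact: ltW].
have m1 : m <= 1 by rewrite /m ler_pdivrMr // mul1r lerD2r (le_trans h3 h4).
set A2 := P0.2 + l * (R0.2 - P0.2).
set B2 := V0.2 + m * (V1.2 - V0.2).
have eA : (A2 - Q.2) * (R0.1 - P0.1) = orient P0 Q R0.
  by rewrite orientE -hl /A2; ring.
have eB : (Q.2 - B2) * (V1.1 - V0.1) = orient V0 V1 Q.
  by rewrite orientE -hm /B2; ring.
have qA : Q.2 <= A2.
  by rewrite -subr_ge0 -(pmulr_lge0 _ d1) eA.
have qB : B2 <= Q.2.
  by rewrite -subr_ge0 -(pmulr_lge0 _ d2) eB.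
have [eAB|nAB] := eqVneq A2 B2.
  exists (1 - l), l, 0, 0; split; first by split; rewrite ?subr_ge0.
  split; first by ring.
  have eq2 : Q.2 = A2 by apply/eqP; rewrite eq_le qA eAB qB.
  rewrite [LHS]surjective_pairing eq2 /A2; congr (_,_); last by ring.
  transitivity (l * (R0.1 - P0.1) + P0.1); first by rewrite hl; ring.
  by ring.
have dAB : 0 < A2 - B2 by rewrite subr_gt0 lt_def nAB (le_trans qB qA).
set t := (Q.2 - B2) / (A2 - B2).
have ht : t * (A2 - B2) = Q.2 - B2 by rewrite /t divfK // gt_eqF.
have t0 : 0 <= t by apply: divr_ge0; [rewrite subr_ge0 | exact: ltW].
have t1 : t <= 1 by rewrite /t ler_pdivrMr // mul1r lerD2r.
exists (t * (1 - l)), (t * l), ((1 - t) * (1 - m)), ((1 - t) * m); split.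
  split; rewrite mulr_ge0 // subr_ge0 //.
split; first by ring.
rewrite [LHS]surjective_pairing; congr (_,_).
  transitivity (t * (P0.1 + l * (R0.1 - P0.1)) + (1 - t) * (V0.1 + m * (V1.1 - V0.1))).
    by rewrite hl hm; ring.
  by rewrite /l /m; ring.
transitivity (t * (A2 - B2) + B2); first by rewrite ht; ring.
by rewrite /A2 /B2; ring.
Qed.

End S2.
Section S3.
Variable R : realType.
Local Notation pt := (R * R)%type.

Lemma edges_core (a b c : pt) : cross a b < 0 -> cross b c < 0 -> 0 <= a.1 -> a.1 <= b.1 ->
  0 <= c.1 -> (a.1 = 0 -> 0 < a.2) -> (c.1 = 0 -> 0 < c.2) -> cross a c < 0.
Proof.
rewrite !crossE => h1 h2 a0 ab c0 ha hc.
have id : (a.1 * c.2 - a.2 * c.1) * b.1 = (a.1 * b.2 - a.2 * b.1) * c.1 + (b.1 * c.2 - b.2 * c.1) * a.1 by ring.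
have [b0|bp] := eqVneq b.1 0.
  have a00 : a.1 = 0 by apply/eqP; rewrite eq_le a0 -b0 ab.
  by move: h1; rewrite a00 b0 !mul0r !mulr0 subrr ltxx.
have bpos : 0 < b.1 by rewrite lt_def bp (le_trans a0 ab).
rewrite -(pmulr_llt0 _ bpos) id.
have [a00|anz] := eqVneq a.1 0.
  have a2p := ha a00.
  have [c00|cnz] := eqVneq c.1 0.
    have c2p := hc c00.
    by move: h2; rewrite c00 mulr0 subr0 => h2; have := mulr_gt0 bpos c2p; rewrite ltNge (ltW h2).
  have cpos : 0 < c.1 by rewrite lt_def cnz c0.
  rewrite a00 mulr0 addr0 pmulr_llt0 //.
  by move: h1; rewrite a00.
have apos : 0 < a.1 by rewrite lt_def anz a0.
have t2 : (b.1 * c.2 - b.2 * c.1) * a.1 < 0 by rewrite pmulr_llt0.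
have t1 : (a.1 * b.2 - a.2 * b.1) * c.1 <= 0 by rewrite nmulr_rle0 // ltW.
by apply: le_lt_trans (lerD t1 (lexx _)) _; rewrite add0r.
Qed.

End S3.

Section S3b.
Variable R : realType.
Local Notation pt := (R * R)%type.

Definition scl (e : R) (p : pt) : pt := (e * p.1, e * p.2).

Lemma cross_scl e (x y : pt) : e * e = 1 -> cross (scl e x) (scl e y) = cross x y.
Proof. by move=> ee; rewrite !crossE /=; transitivity ((e*e) * (x.1*y.2 - x.2*y.1)); [ring|rewrite ee mul1r]. Qed.

Lemma edges_gen (W : seq pt) (e : R) : e * e = 1 ->
  (forall p q r, (p < q)%N -> (q < r)%N -> (r < size W)%N -> orient (wp W p) (wp W q) (wp W r) < 0) ->
  (forall i j, (i < j)%N -> (j < size W)%N -> lex_lt (scl e (wp W i)) (scl e (wp W j))) ->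
  forall s t, (0 < s)%N -> (s < t)%N -> (t < size W)%N -> cross (dd W s) (dd W t) < 0.
Proof.
move=> ee H1 H2 s t s0 st tW.
have sW : (s < size W)%N by lia.
have e1 : (s.-1 < s)%N by lia.
have e2 : (s.-1 < t.-1)%N by lia.
have e3 : (t.-1 < t)%N by lia.
have o1 := H1 _ _ _ e1 st tW.
have o2 := H1 _ _ _ e2 e3 tW.
have [l1a l1b] := lex_lt_le (H2 _ _ e1 sW).
have [l2a l2b] := lex_lt_le (H2 _ _ st tW).
have [l3a l3b] := lex_lt_le (H2 _ _ e3 tW).
move: o1 o2 l1a l1b l2a l2b l3a l3b.
rewrite /dd /scl /=.
set A := wp W s.-1; set B := wp W s; set Cc := wp W t.-1; set D := wp W t.
move=> o1 o2 l1a l1b l2a l2b l3a l3b.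
rewrite -(cross_scl (vsub B A) (vsub D Cc) ee).
apply: (@edges_core _ _ (scl e (vsub D A))).
- by rewrite cross_scl.
- rewrite cross_scl //; move: o2; rewrite /orient !crossE /=.
  by move=> h; apply: le_lt_trans h; rewrite le_eqVlt; apply/orP; left; apply/eqP; ring.
- by rewrite /= mulrBr subr_ge0.
- by rewrite /= !mulrBr lerB.
- by rewrite /= mulrBr subr_ge0.
- rewrite /= !mulrBr => /eqP; rewrite subr_eq0 => /eqP h.
  by rewrite subr_gt0 l1b.
- rewrite /= !mulrBr => /eqP; rewrite subr_eq0 => /eqP h.
  by rewrite subr_gt0 l3b.
Qed.

Lemma orient_negp (a b c : pt) : orient (negp a) (negp b) (negp c) = orient a b c.
Proof. rewrite !orientE /=; ring. Qed.

Lemma upper_props (P : seq pt) v v' U :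
  lexmin_of P v -> lexmax_of P v' -> upper_chain P v v' U ->
  [/\ chain_ok U, wp U 0 = v, wp U (size U).-1 = v', (0 < size U)%N &
      forall t, (t < size U)%N -> wp U t \in P].
Proof.
move=> hv hv' [hs hU].
have UP : forall t, (t < size U)%N -> wp U t \in P.
  by move=> t ht; have [[]] := (hU (wp U t)).1 (mem_nth _ ht).
have vU : v \in U.
  apply/(hU v).2; split; first exact: lexmin_hull.
  by rewrite orientE !subrr !mulr0 subrr.
have v'U : v' \in U.
  apply/(hU v').2; split; first exact: lexmax_hull.
  by rewrite orientE mulrC subrr.
have sz : (0 < size U)%N by case: (U) vU.
have le_v : forall t, (t < size U)%N -> (v.1 <= (wp U t).1).
  move=> t ht; have [->|ne] := eqVneq (wp U t) v; first by [].
  by have [] := lex_lt_le (hv.2 _ (UP t ht) ne).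
have ge_v' : forall t, (t < size U)%N -> ((wp U t).1 <= v'.1).
  move=> t ht; have [->|ne] := eqVneq (wp U t) v'; first by [].
  by have [] := lex_lt_le (hv'.2 _ (UP t ht) ne).
have neq_v : forall t, (0 < t)%N -> (t < size U)%N -> wp U t != v.
  move=> t t0 ht; apply/eqP => e.
  have l := sorted_lex hs t0 ht; rewrite e in l.
  have ne := lex_lt_neq l.
  have := lex_lt_trans (hv.2 _ (UP 0%N sz) ne) l; by rewrite lex_lt_irr.
have neq_v' : forall t, (t < (size U).-1)%N -> wp U t != v'.
  move=> t ht; apply/eqP => e.
  have hl : ((size U).-1 < size U)%N by lia.
  have l := sorted_lex hs ht hl; rewrite e in l.
  have ne : wp U (size U).-1 != v' by rewrite eq_sym; exact: lex_lt_neq l.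
  have := lex_lt_trans l (hv'.2 _ (UP _ hl) ne); by rewrite lex_lt_irr.
have trip : forall p q r, (p < q)%N -> (q < r)%N -> (r < size U)%N ->
     orient (wp U p) (wp U q) (wp U r) < 0.
  move=> p q r pq qr rU; rewrite ltNge; apply/negP => o.
  have qU : (q < size U)%N by lia.
  have pU : (p < size U)%N by lia.
  have q0 : (0 < q)%N by lia.
  have q1 : (q < (size U).-1)%N by lia.
  have [hq oq] := (hU (wp U q)).1 (mem_nth _ qU).
  apply: hq.2.
  have [la lb] := lex_lt_le (sorted_lex hs pq qU).
  have [lc ld] := lex_lt_le (sorted_lex hs qr rU).
  have hvv : (wp U p).1 = (wp U r).1 -> (wp U p).2 <= (wp U q).2 /\ (wp U q).2 <= (wp U r).2.
    move=> e.
    have e1 : (wp U p).1 = (wp U q).1 by apply/eqP; rewrite eq_le la e lc.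
    by split; apply: ltW; [apply: lb | apply: ld; rewrite -e1].
  have [c1 [c2 [c3 [c4 [[g1 g2 g3 g4] [hs1 hz]]]]]] :=
    @core4 _ (wp U p) (wp U q) (wp U r) v v' (le_v _ pU) la lc (ge_v' _ rU) hvv oq o.
  apply: (conv4 _ _ _ _ g1 g2 g3 g4 hs1 hz); rewrite mem_filter.
  - by rewrite (UP _ pU) andbT (lex_lt_neq (sorted_lex hs pq qU)).
  - by rewrite (UP _ rU) andbT eq_sym (lex_lt_neq (sorted_lex hs qr rU)).
  - by rewrite hv.1 andbT eq_sym neq_v.
  - by rewrite hv'.1 andbT eq_sym neq_v'.
split => //.
- split => //; apply: (@edges_gen U 1); first by rewrite mulr1.
    by [].
  move=> i j ij jU; rewrite /scl !mul1r -!surjective_pairing.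
  exact: sorted_lex.
- have i0 : (index v U == 0)%N.
    rewrite -leqn0 leqNgt; apply/negP => hi.
    have := neq_v _ hi; rewrite index_mem; move/(_ vU).
    by rewrite /wp nth_index // eqxx.
  by rewrite /wp -(eqP i0) nth_index.
- have hl0 : (index v' U < size U)%N by rewrite index_mem.
  have hl : (index v' U <= (size U).-1)%N by lia.
  move: hl; rewrite leq_eqVlt => /orP[/eqP <-|hi]; first by rewrite /wp nth_index.
  by have := neq_v' _ hi; rewrite /wp nth_index // eqxx.
Qed.

End S3b.

Section S3c.
Variable R : realType.
Local Notation pt := (R * R)%type.

Lemma lex_lt_neg (p q : pt) : lex_lt q p -> lex_lt (scl (-1) p) (scl (-1) q).
Proof.
rewrite /lex_lt /scl /= !mulN1r ltrN2 eqr_opp ltrN2 => /orP[h|/andP[e h]].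
  by rewrite h.
by rewrite eq_sym e h orbT.
Qed.

Lemma lower_props (P : seq pt) v v' L :
  lexmin_of P v -> lexmax_of P v' -> lower_chain P v v' L ->
  [/\ chain_ok L, wp L 0 = v', wp L (size L).-1 = v, (0 < size L)%N &
      forall t, (t < size L)%N -> wp L t \in P].
Proof.
move=> hv hv' [hs hU].
have UP : forall t, (t < size L)%N -> wp L t \in P.
  by move=> t ht; have [[]] := (hU (wp L t)).1 (mem_nth _ ht).
have vU : v \in L.
  apply/(hU v).2; split; first exact: lexmin_hull.
  by rewrite orientE !subrr !mulr0 subrr.
have v'U : v' \in L.
  apply/(hU v').2; split; first exact: lexmax_hull.
  by rewrite orientE mulrC subrr.
have sz : (0 < size L)%N by case: (L) vU.
have le_v : forall t, (t < size L)%N -> (v.1 <= (wp L t).1).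
  move=> t ht; have [->|ne] := eqVneq (wp L t) v; first by [].
  by have [] := lex_lt_le (hv.2 _ (UP t ht) ne).
have ge_v' : forall t, (t < size L)%N -> ((wp L t).1 <= v'.1).
  move=> t ht; have [->|ne] := eqVneq (wp L t) v'; first by [].
  by have [] := lex_lt_le (hv'.2 _ (UP t ht) ne).
have neq_v' : forall t, (0 < t)%N -> (t < size L)%N -> wp L t != v'.
  move=> t t0 ht; apply/eqP => e.
  have l := sorted_lex_rev hs t0 ht; rewrite e in l.
  have ne : wp L 0 != v' by rewrite eq_sym; exact: lex_lt_neq l.
  have := lex_lt_trans l (hv'.2 _ (UP 0%N sz) ne); by rewrite lex_lt_irr.
have neq_v : forall t, (t < (size L).-1)%N -> wp L t != v.
  move=> t ht; apply/eqP => e.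
  have hl : ((size L).-1 < size L)%N by lia.
  have l := sorted_lex_rev hs ht hl; rewrite e in l.
  have ne : wp L (size L).-1 != v by exact: lex_lt_neq l.
  have := lex_lt_trans (hv.2 _ (UP _ hl) ne) l; by rewrite lex_lt_irr.
have trip : forall p q r, (p < q)%N -> (q < r)%N -> (r < size L)%N ->
     orient (wp L p) (wp L q) (wp L r) < 0.
  move=> p q r pq qr rU; rewrite ltNge; apply/negP => o.
  have qU : (q < size L)%N by lia.
  have pU : (p < size L)%N by lia.
  have q0 : (0 < q)%N by lia.
  have q1 : (q < (size L).-1)%N by lia.
  have [hq oq] := (hU (wp L q)).1 (mem_nth _ qU).
  apply: hq.2.
  have [la lb] := lex_lt_le (sorted_lex_rev hs pq qU).
  have [lc ld] := lex_lt_le (sorted_lex_rev hs qr rU).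
  have hvv : (negp (wp L p)).1 = (negp (wp L r)).1 ->
      (negp (wp L p)).2 <= (negp (wp L q)).2 /\ (negp (wp L q)).2 <= (negp (wp L r)).2.
    rewrite /= => /oppr_inj e.
    have e1 : (wp L q).1 = (wp L p).1 by apply/eqP; rewrite eq_le la e lc.
    have e2 : (wp L r).1 = (wp L q).1 by rewrite e1 e.
    by rewrite !lerN2; split; apply: ltW; [exact: lb e1 | exact: ld e2].
  have o1 : 0 <= orient (negp v') (negp v) (negp (wp L q)).
    by rewrite orient_negp orient_swap oppr_ge0.
  have o2 : 0 <= orient (negp (wp L p)) (negp (wp L q)) (negp (wp L r)) by rewrite orient_negp.
  have [c1 [c2 [c3 [c4 [[g1 g2 g3 g4] [hs1 hz]]]]]] :=
    @core4 _ (negp (wp L p)) (negp (wp L q)) (negp (wp L r)) (negp v') (negp v)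
      (ltac:(by rewrite /= lerN2 ge_v')) (ltac:(by rewrite /= lerN2))
      (ltac:(by rewrite /= lerN2)) (ltac:(by rewrite /= lerN2 le_v)) hvv o1 o2.
  have hz' : wp L q = (c1 * (wp L p).1 + c2 * (wp L r).1 + c3 * v'.1 + c4 * v.1,
                       c1 * (wp L p).2 + c2 * (wp L r).2 + c3 * v'.2 + c4 * v.2).
    move: hz; rewrite /negp => /pair_equal_spec [e1 e2].
    rewrite [LHS]surjective_pairing; congr (_,_).
      by rewrite -[LHS]opprK e1 /=; ring.
    by rewrite -[LHS]opprK e2 /=; ring.
  apply: (conv4 _ _ _ _ g1 g2 g3 g4 hs1 hz'); rewrite mem_filter.
  - by rewrite (UP _ pU) andbT eq_sym (lex_lt_neq (sorted_lex_rev hs pq qU)).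
  - by rewrite (UP _ rU) andbT (lex_lt_neq (sorted_lex_rev hs qr rU)).
  - by rewrite hv'.1 andbT eq_sym neq_v'.
  - by rewrite hv.1 andbT eq_sym neq_v.
split => //.
- split => //; apply: (@edges_gen _ L (-1)); first by rewrite mulN1r opprK.
    by [].
  move=> i j ij jU; apply: lex_lt_neg.
  exact: sorted_lex_rev.
- have i0 : (index v' L == 0)%N.
    rewrite -leqn0 leqNgt; apply/negP => hi.
    have := neq_v' _ hi; rewrite index_mem; move/(_ v'U).
    by rewrite /wp nth_index // eqxx.
  by rewrite /wp -(eqP i0) nth_index.
- have hl0 : (index v L < size L)%N by rewrite index_mem.
  have hl : (index v L <= (size L).-1)%N by lia.
  move: hl; rewrite leq_eqVlt => /orP[/eqP <-|hi]; first by rewrite /wp nth_index.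
  by have := neq_v _ hi; rewrite /wp nth_index // eqxx.
Qed.

End S3c.
Section S4.
Variable R : realType.
Local Notation pt := (R * R)%type.

Lemma node_geom (W : seq pt) i j : chain_ok W -> (0 < i)%N -> (i < j)%N -> (j < size W)%N ->
  exists tau mu : R, [/\ 0 < tau, mu < 0,
    meet (wp W i.-1) (wp W i) (wp W j.-1) (wp W j) =
      ((wp W i.-1).1 + tau * ((wp W i).1 - (wp W i.-1).1),
       (wp W i.-1).2 + tau * ((wp W i).2 - (wp W i.-1).2)) &
    meet (wp W i.-1) (wp W i) (wp W j.-1) (wp W j) =
      ((wp W j).1 + mu * ((wp W j).1 - (wp W j.-1).1),
       (wp W j).2 + mu * ((wp W j).2 - (wp W j.-1).2))].
Proof.
move=> [H1 H2] i0 ij jW.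
have den := H2 _ _ i0 ij jW.
have o1 : orient (wp W i.-1) (wp W j.-1) (wp W j) < 0 by apply: H1; lia.
have o2 : orient (wp W i.-1) (wp W i) (wp W j) < 0 by apply: H1; lia.
move: den o1 o2; rewrite /dd /meet.
set A := wp W i.-1; set B := wp W i; set Cc := wp W j.-1; set D := wp W j.
move=> den o1 o2.
have dn : cross (vsub B A) (vsub D Cc) != 0 by rewrite lt_eqF.
exists (cross (vsub Cc A) (vsub D Cc) / cross (vsub B A) (vsub D Cc)).
exists (cross (vsub D A) (vsub B A) / cross (vsub B A) (vsub D Cc)).
have eT : cross (vsub Cc A) (vsub D Cc) = orient A Cc D by rewrite /orient !crossE /=; ring.
have eM : cross (vsub D A) (vsub B A) = - orient A B D by rewrite /orient !crossE /=; ring.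
split => //.
- by rewrite -mulrNN -invrN divr_gt0 // oppr_gt0 // eT.
- by rewrite pmulr_rlt0 ?invr_lt0 // eM oppr_gt0.
- move: dn; rewrite /= !crossE /= => dn.
  congr (_,_); field; exact: dn.
Qed.

End S4.
Section S5.
Variable R : realType.
Local Notation pt := (R * R)%type.

Lemma convex3 (C : set pt) (X Y Z : pt) (la lb lc : R) : convex_set C -> C X -> C Y -> C Z ->
  0 <= la -> 0 <= lb -> 0 <= lc -> la + lb + lc = 1 ->
  C (la*X.1 + lb*Y.1 + lc*Z.1, la*X.2 + lb*Y.2 + lc*Z.2).
Proof.
move=> cv cX cY cZ ha hb hc hs.
have [e0|ne] := eqVneq (lb + lc) 0.
  have lb0 : lb = 0 by apply/eqP; rewrite eq_le hb andbT -e0 lerDl.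
  have lc0 : lc = 0 by move: e0; rewrite lb0 add0r.
  have la1 : la = 1 by move: hs; rewrite lb0 lc0 !addr0.
  by rewrite la1 lb0 lc0 !mul1r !mul0r !addr0 -surjective_pairing.
set s := lb + lc.
have sp : 0 < s by rewrite lt_def ne addr_ge0.
have t01 : 0 <= lb / s <= 1.
  apply/andP; split; first by apply: divr_ge0 => //; exact: ltW.
  by rewrite ler_pdivrMr // mul1r /s lerDl.
have cM := cv Y Z (lb / s) cY cZ t01.
have la01 : 0 <= la <= 1 by rewrite ha /= -hs -addrA lerDl addr_ge0.
have := cv X _ la cX cM la01.
have hla : 1 - la = s by rewrite /s -hs; ring.
rewrite /= hla.
have E : forall x y z : R, la * x + s * (lb / s * y + (1 - lb / s) * z) = la * x + lb * y + lc * z.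
  by move=> x y z; rewrite /s; field; rewrite -/s gt_eqF.
by rewrite !E.
Qed.

Lemma orient_sum (X Y Z P : pt) : orient P Y Z + orient X P Z + orient X Y P = orient X Y Z.
Proof. rewrite !orientE; ring. Qed.

Lemma cramer (X Y Z P : pt) : orient X Y Z != 0 ->
  P = (orient P Y Z / orient X Y Z * X.1 + orient X P Z / orient X Y Z * Y.1 + orient X Y P / orient X Y Z * Z.1,
       orient P Y Z / orient X Y Z * X.2 + orient X P Z / orient X Y Z * Y.2 + orient X Y P / orient X Y Z * Z.2).
Proof.
rewrite !orientE => h.
rewrite [LHS]surjective_pairing; congr (_,_); field; exact: h.
Qed.

Lemma orient_aab (a b : pt) : orient a b b = 0.
Proof. rewrite orientE; ring. Qed.
Lemma orient_aaz (a b : pt) : orient a a b = 0.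
Proof. rewrite orientE; ring. Qed.

Lemma leaf_in (C : set pt) (W : seq pt) i j t : convex_set C -> chain_ok W ->
  (0 < i)%N -> (i < j)%N -> (j < size W)%N ->
  C (wp W i.-1) -> C (wp W j) -> C (meet (wp W i.-1) (wp W i) (wp W j.-1) (wp W j)) ->
  (i <= t)%N -> (t < j)%N -> C (wp W t).
Proof.
move=> cv ch i0 ij jW cA cD cq it tj.
have [tau [mu [tp mn eq1 eq2]]] := node_geom ch i0 ij jW.
have [H1 H2] := ch.
have oABD : orient (wp W i.-1) (wp W i) (wp W j) < 0 by apply: H1; lia.
have oAPD : orient (wp W i.-1) (wp W t) (wp W j) < 0 by apply: H1; lia.
have oABP : orient (wp W i.-1) (wp W i) (wp W t) <= 0.
  have [->|ne] := eqVneq t i; first by rewrite orient_aab.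
  by apply: ltW; apply: H1; lia.
have oPCD : orient (wp W t) (wp W j.-1) (wp W j) <= 0.
  have [->|ne] := eqVneq t j.-1; first by rewrite orient_aaz.
  by apply: ltW; apply: H1; lia.
move: cq eq1 eq2 oABD oAPD oABP oPCD.
set A := wp W i.-1; set B := wp W i; set Cc := wp W j.-1; set D := wp W j; set Pt := wp W t.
set q := meet A B Cc D.
move=> cq eq1 eq2 oABD oAPD oABP oPCD.
have e1 : forall Z, orient A q Z = tau * orient A B Z.
  by move=> Z; rewrite eq1 !orientE /=; ring.
have e2 : orient Pt q D = - mu * orient Pt Cc D.
  by rewrite eq2 !orientE /=; ring.
have dl : orient A q D < 0 by rewrite e1 pmulr_rlt0.
have dn : orient A q D != 0 by rewrite lt_eqF.
have dnn : forall x y : R, x <= 0 -> y < 0 -> 0 <= x / y.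
  move=> x y hx hy; rewrite -mulrNN -invrN; apply: divr_ge0; rewrite ?oppr_ge0 //.
  exact: ltW.
have w1 : 0 <= orient Pt q D / orient A q D.
  apply: dnn => //; rewrite e2 pmulr_rle0 // oppr_gt0 //.
have w2 : 0 <= orient A Pt D / orient A q D by apply: dnn => //; exact: ltW.
have w3 : 0 <= orient A q Pt / orient A q D.
  by apply: dnn => //; rewrite e1 pmulr_rle0.
have ws : orient Pt q D / orient A q D + orient A Pt D / orient A q D + orient A q Pt / orient A q D = 1.
  by rewrite -!mulrDl orient_sum divff.
rewrite (cramer Pt dn).
exact: convex3.
Qed.

Lemma q_consec (W : seq pt) i : chain_ok W -> (0 < i)%N -> (i.+1 < size W)%N ->
  meet (wp W i.-1) (wp W i) (wp W i.+1.-1) (wp W i.+1) = wp W i.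
Proof.
move=> [_ H2] i0 iW.
have := H2 _ _ i0 (ltnSn i) iW; rewrite /dd /= => h.
rewrite /meet /= divff ?lt_eqF // !mul1r.
by rewrite [RHS]surjective_pairing; congr (_,_); ring.
Qed.

Lemma sqr_sum_eq0 (x y : R) : x * x + y * y = 0 -> x = 0 /\ y = 0.
Proof.
move=> h.
have hx : 0 <= x * x by rewrite -expr2 sqr_ge0.
have hy : 0 <= y * y by rewrite -expr2 sqr_ge0.
move/eqP: h; rewrite paddr_eq0 // => /andP[hx0 hy0].
by split; apply/eqP; [move: hx0 | move: hy0]; rewrite mulf_eq0 orbb.
Qed.

Lemma collinear3 (q a X Y Z : pt) : q != a -> orient q a X = 0 -> orient q a Y = 0 ->
  orient q a Z = 0 -> orient X Y Z = 0.
Proof.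
move=> nqa hX hY hZ.
have id : ((a.1 - q.1) * (a.1 - q.1) + (a.2 - q.2) * (a.2 - q.2)) * orient X Y Z =
   (orient q a Z - orient q a X) * ((a.1 - q.1) * (Y.1 - X.1) + (a.2 - q.2) * (Y.2 - X.2))
 - (orient q a Y - orient q a X) * ((a.1 - q.1) * (Z.1 - X.1) + (a.2 - q.2) * (Z.2 - X.2)).
  by rewrite !orientE; ring.
move: id; rewrite hX hY hZ subrr !mul0r subrr => /eqP; rewrite mulf_eq0 => /orP[/eqP h|/eqP //].
have [h1 h2] := sqr_sum_eq0 h.
move: nqa; rewrite [q]surjective_pairing [a]surjective_pairing.
move/eqP: h1; rewrite subr_eq0 => /eqP ->.
by move/eqP: h2; rewrite subr_eq0 => /eqP ->; rewrite eqxx.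
Qed.

Lemma three_signs (W : seq pt) (u : pt) x y z : chain_ok W -> (0 < x)%N -> (x < y)%N -> (y < z)%N ->
  (z < size W)%N -> cross u (dd W x) < 0 -> 0 < cross u (dd W y) -> cross u (dd W z) < 0 -> False.
Proof.
move=> [_ H2] x0 xy yz zW h1 h2 h3.
have Nxy := H2 _ _ x0 xy (ltn_trans yz zW).
have Nxz := H2 _ _ x0 (ltn_trans xy yz) zW.
have Nyz := H2 _ _ (ltn_trans x0 xy) yz zW.
move: Nxy Nxz Nyz h1 h2 h3.
set a := dd W x; set b := dd W y; set c := dd W z.
move=> Nxy Nxz Nyz h1 h2 h3.
have id : cross a b * cross u c = cross u b * cross a c + cross a u * cross b c.
  by rewrite !crossE; ring.
have l : 0 < cross a b * cross u c by rewrite nmulr_lgt0.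
have r : cross u b * cross a c + cross a u * cross b c < 0.
  have cau : 0 < cross a u by move: h1; rewrite !crossE => h1; lra.
  have t1 : cross u b * cross a c < 0 by rewrite pmulr_rlt0.
  have t2 : cross a u * cross b c < 0 by rewrite pmulr_rlt0.
  lra.
by move: l; rewrite id => l; have := lt_trans l r; rewrite ltxx.
Qed.

End S5.
Section S6.
Variable R : realType.
Local Notation pt := (R * R)%type.

Lemma conv_nonempty (V : seq pt) X : conv V X -> V != [::].
Proof.
case: V => //= -[w [_ [h _]]].
by move: h; rewrite big_ord0 => /eqP; rewrite eq_sym oner_eq0.
Qed.

Lemma ratio_le (x y u w : R) : 0 < y -> 0 < w -> x / y <= u / w -> x * w <= u * y.
Proof. by move=> yp wp; rewrite ler_pdivrMr // mulrAC ler_pdivlMr. Qed.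

Lemma ratio_eq (x y u w : R) : 0 < y -> 0 < w -> x * w = u * y -> x / y = u / w.
Proof.
move=> yp wp h; apply/eqP; rewrite eqr_div; [exact/eqP|by rewrite gt_eqF|by rewrite gt_eqF].
Qed.

Lemma supp_exists (V : seq pt) (q : pt) (u1 u2 c : R) (X Y Z : pt) :
  (forall z, z \in V -> u1*z.1 + u2*z.2 <= c) -> c < u1*q.1 + u2*q.2 ->
  conv V X -> conv V Y -> conv V Z -> orient X Y Z != 0 ->
  exists a b, [/\ a \in V, b \in V, a != b, (forall z, z \in V -> 0 <= orient a b z) & orient a b q < 0].
Proof.
move=> hV hq cX cY cZ nXYZ.
have Vn := conv_nonempty cX.
pose g (z : pt) := u1*(q.1 - z.1) + u2*(q.2 - z.2).
have gpos : forall z, z \in V -> 0 < g z.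
  by move=> z /hV hz; rewrite /g; lra.
pose d (z : pt) := u1*(z.2 - q.2) - u2*(z.1 - q.1).
pose rho z := d z / g z.
have [a0 a0V a0max] := argmax_seq rho Vn.
pose T := [seq z <- V | rho z == rho a0].
have Tn : T != [::].
  apply/negP => /eqP hT.
  have : a0 \in T by rewrite mem_filter eqxx a0V.
  by rewrite hT.
have [a aT amin] := argmax_seq (fun z => - g z) Tn.
move: aT; rewrite mem_filter => /andP[/eqP ra aV].
have amax : forall z, z \in V -> rho z <= rho a by move=> z /a0max; rewrite ra.
have anear : forall z, z \in V -> rho z = rho a -> g a <= g z.
  move=> z zV hz; rewrite -lerN2; apply: amin.
  by rewrite mem_filter zV hz ra eqxx.
have ga := gpos a aV.
have u0 : 0 < u1 * u1 + u2 * u2.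
  have := hV a aV; rewrite lt_def => h1.
  have hs : 0 <= u1 * u1 + u2 * u2 by rewrite addr_ge0 // -expr2 sqr_ge0.
  rewrite hs andbT; apply/negP => /eqP h0.
  have [e1 e2] := sqr_sum_eq0 h0.
  by move: hq h1; rewrite e1 e2 !mul0r addr0 => hq h1; lra.
have I1 : forall z, (u1 * u1 + u2 * u2) * orient q a z = d a * g z - g a * d z.
  by move=> z; rewrite /d /g orientE; ring.
have beta_ge0 : forall z, z \in V -> 0 <= orient q a z.
  move=> z zV.
  have h := ratio_le (gpos z zV) ga (amax z zV).
  by rewrite -(pmulr_rge0 _ u0) I1 subr_ge0 mulrC.
have tied : forall z, z \in V -> orient q a z = 0 ->
    0 <= (a.1 - q.1) * (z.1 - a.1) + (a.2 - q.2) * (z.2 - a.2).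
  move=> z zV h0.
  have e : d a * g z = g a * d z by apply/eqP; rewrite -subr_eq0 -I1 h0 mulr0.
  have hz : rho z = rho a.
    by apply: ratio_eq; [exact: gpos | exact: ga | rewrite mulrC -e mulrC].
  have gle := anear z zV hz.
  have I2 : ((a.1 - q.1) * (a.1 - q.1) + (a.2 - q.2) * (a.2 - q.2)) * g z =
     ((a.1 - q.1) * (z.1 - q.1) + (a.2 - q.2) * (z.2 - q.2)) * g a
     - orient q a z * ((a.1 - q.1) * u2 - (a.2 - q.2) * u1).
    by rewrite /g orientE; ring.
  move: I2; rewrite h0 mul0r subr0 => I2.
  set N := (a.1 - q.1) * (a.1 - q.1) + (a.2 - q.2) * (a.2 - q.2) in I2.
  set M := (a.1 - q.1) * (z.1 - q.1) + (a.2 - q.2) * (z.2 - q.2) in I2.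
  have N0 : 0 <= N by rewrite /N addr_ge0 // -expr2 sqr_ge0.
  have : 0 <= (M - N) * g a.
    rewrite mulrBl -I2 -mulrBr; apply: mulr_ge0 => //; rewrite subr_ge0 //.
  rewrite pmulr_lge0 // => h.
  have -> : (a.1 - q.1) * (z.1 - a.1) + (a.2 - q.2) * (z.2 - a.2) = M - N by rewrite /M /N; ring.
  exact: h.
pose beta z := orient q a z.
pose alpha (z : pt) := (a.1 - q.1) * (z.1 - a.1) + (a.2 - q.2) * (z.2 - a.2).
have [/hasP[z0 z0V z0p]|/hasPn hn] := boolP (has (fun z => 0 < orient q a z) V); last first.
  exfalso; move/negP: nXYZ; apply.
  have all0 : forall z, z \in V -> orient q a z <= 0 by move=> z /hn; rewrite -leNgt.
  have ge0 : forall z, z \in V -> 0 <= orient q a z := beta_ge0.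
  have e0 : forall W, conv V W -> orient q a W = 0.
    move=> W hW; apply/eqP; rewrite eq_le.
    by rewrite (conv_orient_le0 hW all0) (conv_orient_ge0 hW ge0).
  apply/eqP; apply: (@collinear3 _ q a); rewrite ?e0 //.
  apply/eqP => qa; move: ga; rewrite -qa /g !subrr !mulr0 addr0 ltxx //.
pose Bs := [seq z <- V | 0 < orient q a z].
have Bn : Bs != [::].
  apply/negP => /eqP hB.
  have : z0 \in Bs by rewrite mem_filter z0p z0V.
  by rewrite hB.
have [b bB bmin] := argmax_seq (fun z => - (alpha z / beta z)) Bn.
move: bB; rewrite mem_filter => /andP[bp bV].
have E1 : 0 < (a.1 - q.1) * (a.1 - q.1) + (a.2 - q.2) * (a.2 - q.2).
  rewrite lt_def addr_ge0 ?andbT; try by rewrite -expr2 sqr_ge0.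
  apply/negP => /eqP h0; have [e1 e2] := sqr_sum_eq0 h0.
  move: ga; rewrite /g.
  have -> : q.1 - a.1 = - (a.1 - q.1) by ring.
  have -> : q.2 - a.2 = - (a.2 - q.2) by ring.
  by rewrite e1 e2 oppr0 !mulr0 addr0 ltxx.
have I3 : forall z, ((a.1 - q.1) * (a.1 - q.1) + (a.2 - q.2) * (a.2 - q.2)) * orient b a z =
    beta b * alpha z - alpha b * beta z.
  by move=> z; rewrite /beta /alpha !orientE; ring.
exists b, a; split => //.
- by apply/eqP => ba; move: bp; rewrite ba orient_aab ltxx.
- move=> z zV; rewrite -(pmulr_rge0 _ E1) I3 subr_ge0.
  have [zp|zn] := ltP 0 (beta z).
    have zB : z \in Bs by rewrite mem_filter zp zV.
    have h := bmin z zB; rewrite lerN2 in h.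
    by rewrite (mulrC (beta b)); exact: ratio_le bp zp h.
  have bz0 : beta z = 0 by apply/eqP; rewrite eq_le zn beta_ge0.
  rewrite bz0 mulr0; apply: mulr_ge0; first exact: ltW.
  exact: tied.
- have -> : orient b a q = - orient q a b by rewrite !orientE; ring.
  by rewrite oppr_lt0.
Qed.
End S6.
Section S7.
Variable R : realType.
Local Notation pt := (R * R)%type.
Variables (C : set pt) (O : pt -> option (R * R * R)) (W P V : seq pt).
Hypotheses (hO : sep_oracle C O) (cvC : convex_set C) (ch : chain_ok W)
  (WP : forall t, (t < size W)%N -> wp W t \in P) (hF : inner_fence C P V).

Lemma mem_of_in q : mem_of O q -> C q.
Proof. by rewrite /mem_of; have := hO q; case: (O q) => [[[a b] c]|]. Qed.

Lemma mem_of_out q : mem_of O q = false -> ~ C q.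
Proof.
rewrite /mem_of; have := hO q; case: (O q) => [[[a b] c]|] //= [_ [hlt hall]] _ hC.
by have := hall q hC; rewrite leNgt hlt.
Qed.

Lemma oracle_sep q : ~ C q -> exists u1 u2 c, (forall z, C z -> u1 * z.1 + u2 * z.2 <= c) /\ c < u1 * q.1 + u2 * q.2.
Proof.
have := hO q; case: (O q) => [[[a b] c]|] //= [_ [hlt hall]] _.
by exists a, b, c.
Qed.

Definition relP (i j : nat) (a : pt) : Prop :=
  exists b, [/\ b \in V, a != b, (forall z, z \in V -> 0 <= orient a b z) &
   exists s t, [/\ (i <= s)%N, (s < t)%N, (t <= j)%N, (0 < s)%N &
     [/\ (t < size W)%N, conv V (wp W s.-1), conv V (wp W s),
         cross (vsub b a) (dd W s) < 0 & 0 < cross (vsub b a) (dd W t)]]].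

Definition rcount i j := count (fun a => `[< relP i j a >]) V.

Lemma rel_mono i j i' j' a : relP i j a -> (i' <= i)%N -> (j <= j')%N -> relP i' j' a.
Proof.
move=> [b [bV ab sab [s [t [h1 h2 h3 h4 h5]]]]] hi hj.
exists b; split => //; exists s, t; split => //; [exact: leq_trans hi h1 | exact: leq_trans h3 hj].
Qed.

Lemma cross_orient (a b X Y : pt) : cross (vsub b a) (vsub Y X) = orient a b Y - orient a b X.
Proof. rewrite /orient !crossE /=; ring. Qed.

Lemma rel_disj i m j a : relP i m a -> relP m j a -> False.
Proof.
move=> [b1 [b1V ab1 s1p [s1 [t1 [_ st1 t1m s10 [t1W c1 c2 n1 p1]]]]]].
move=> [b2 [b2V ab2 s2p [s2 [t2 [ms2 st2 _ s20 [t2W _ _ n2 p2]]]]]].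
set e1 := vsub b1 a in n1 p1; set e2 := vsub b2 a in n2 p2.
have cr : cross e1 e2 = 0.
  have h1 := s1p b2 b2V; have h2 := s2p b1 b1V.
  move: h1 h2; rewrite /orient -/e1 -/e2 !crossE /= => h1 h2.
  apply/eqP; rewrite eq_le; apply/andP; split; last by [].
  by rewrite -oppr_ge0; apply: le_trans h2 _; rewrite le_eqVlt; apply/orP; left; apply/eqP; ring.
have N1 : 0 < e1.1 * e1.1 + e1.2 * e1.2.
  rewrite lt_def addr_ge0 ?andbT; try by rewrite -expr2 sqr_ge0.
  apply/negP => /eqP h0; have [h1 h2] := sqr_sum_eq0 h0.
  move: ab1; rewrite [a]surjective_pairing [b1]surjective_pairing.
  move: h1 h2; rewrite /e1 /= => /eqP; rewrite subr_eq0 => /eqP -> /eqP; rewrite subr_eq0 => /eqP ->.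
  by rewrite eqxx.
set k := e1.1 * e2.1 + e1.2 * e2.2.
have id : forall d : pt, (e1.1 * e1.1 + e1.2 * e1.2) * cross e2 d = k * cross e1 d.
  move=> d; have : (e1.1 * e1.1 + e1.2 * e1.2) * cross e2 d =
       k * cross e1 d - cross e1 e2 * (e1.1 * d.1 + e1.2 * d.2).
    by rewrite /k !crossE; ring.
  by rewrite cr mul0r subr0.
have [kp|kn] := ltP 0 k.
  have ns2 : cross e1 (dd W s2) < 0.
    by rewrite -(pmulr_rlt0 _ kp) -id pmulr_rlt0.
  have [et|nt] := eqVneq t1 s2.
    by move: p1; rewrite et => p1; have := lt_trans ns2 p1; rewrite ltxx.
  have ts : (t1 < s2)%N by rewrite ltn_neqAle nt (leq_trans t1m ms2).
  exact: (three_signs ch s10 st1 ts (ltn_trans st2 t2W) n1 p1 ns2).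
have [k0|kneg] := eqVneq k 0.
  by move: (id (dd W s2)); rewrite k0 mul0r => /eqP; rewrite mulf_eq0 gt_eqF //= => /eqP h; move: n2; rewrite h ltxx.
have kl : k < 0 by rewrite lt_def eq_sym kneg kn.
have le0 : forall z, z \in V -> orient a b1 z <= 0.
  move=> z zV.
  have h := s2p z zV.
  have e : (e1.1 * e1.1 + e1.2 * e1.2) * orient a b2 z = k * orient a b1 z.
    by rewrite /orient -/e1 -/e2 id.
  have : 0 <= k * orient a b1 z by rewrite -e mulr_ge0 // ltW.
  by rewrite nmulr_rge0.
have z1 : orient a b1 (wp W s1.-1) = 0.
  by apply/eqP; rewrite eq_le (conv_orient_le0 c1 le0) (conv_orient_ge0 c1 s1p).
have z2 : orient a b1 (wp W s1) = 0.
  by apply/eqP; rewrite eq_le (conv_orient_le0 c2 le0) (conv_orient_ge0 c2 s1p).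
by move: n1; rewrite /e1 /dd cross_orient z1 z2 subrr ltxx.
Qed.

Lemma count_split (T : eqType) (p p1 p2 : pred T) (s : seq T) :
  (forall x, x \in s -> p1 x -> p2 x -> False) -> (forall x, p1 x -> p x) -> (forall x, p2 x -> p x) ->
  (count p1 s + count p2 s <= count p s)%N.
Proof.
move=> hd h1 h2; rewrite -count_predUI.
have -> : count (predI p1 p2) s = 0%N.
  rewrite (@eq_in_count _ _ pred0); first by rewrite count_pred0.
  move=> x xs /=; apply/negP => /andP[a b]; exact: hd x xs a b.
by rewrite addn0; apply: sub_count => x /orP[/h1|/h2].
Qed.

Lemma rcount_split i m j : (i <= m)%N -> (m <= j)%N -> (rcount i m + rcount m j <= rcount i j)%N.
Proof.
move=> im mj; apply: count_split.
- by move=> x _ /asboolP h1 /asboolP h2; exact: rel_disj h1 h2.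
- by move=> x /asboolP h; apply/asboolP; apply: rel_mono h _ _.
- by move=> x /asboolP h; apply/asboolP; apply: rel_mono h _ _.
Qed.

Lemma rcount_pos i j q : (0 < i)%N -> (i < j)%N -> (j < size W)%N ->
  q = meet (wp W i.-1) (wp W i) (wp W j.-1) (wp W j) -> ~ C q ->
  C (wp W i.-1) -> C (wp W i) -> C (wp W j) -> (0 < rcount i j)%N.
Proof.
move=> i0 ij jW -> nq cA cB cD.
have [u1 [u2 [c [hu hcq]]]] := oracle_sep nq.
have inV : forall t, (t < size W)%N -> C (wp W t) -> conv V (wp W t).
  by move=> t ht hc; exact: (hF.2 _ (WP ht)).2 hc.
have VC : forall z, z \in V -> C z by move=> z hz; apply: hF.1; exact: mem_conv.
have [H1 H2] := ch.
have o : orient (wp W i.-1) (wp W i) (wp W j) != 0 by rewrite lt_eqF //; apply: H1; lia.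
have [a [b [aV bV ab sab oq]]] := supp_exists (fun z hz => hu z (VC z hz)) hcq
   (inV _ (ltn_trans (leq_ltn_trans (leq_pred i) ij) jW) cA)
   (inV _ (ltn_trans ij jW) cB) (inV _ jW cD) o.
rewrite -has_count; apply/hasP; exists a => //; apply/asboolP.
exists b; split => //; exists i, j; split => //; split => //.
- exact: inV _ (ltn_trans (leq_ltn_trans (leq_pred i) ij) jW) cA.
- exact: inV _ (ltn_trans ij jW) cB.
- have [tau [mu [tp mn eq1 eq2]]] := node_geom ch i0 ij jW.
  move: oq; rewrite eq1.
  have -> : forall (A B : pt), orient a b (A.1 + tau * (B.1 - A.1), A.2 + tau * (B.2 - A.2)) =
      orient a b A + tau * cross (vsub b a) (vsub B A).
    by move=> A B; rewrite !orientE !crossE /=; ring.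
  have hA : 0 <= orient a b (wp W i.-1).
    by apply: (conv_orient_ge0 _ sab); exact: inV _ (ltn_trans (leq_ltn_trans (leq_pred i) ij) jW) cA.
  move=> h; have : tau * cross (vsub b a) (dd W i) < 0.
    by apply: le_lt_trans h; rewrite /dd lerDr.
  by rewrite pmulr_rlt0.
- have [tau [mu [tp mn eq1 eq2]]] := node_geom ch i0 ij jW.
  move: oq; rewrite eq2.
  have -> : forall (D Cc : pt), orient a b (D.1 + mu * (D.1 - Cc.1), D.2 + mu * (D.2 - Cc.2)) =
      orient a b D + mu * cross (vsub b a) (vsub D Cc).
    by move=> D Cc; rewrite !orientE !crossE /=; ring.
  have hD : 0 <= orient a b (wp W j) by apply: (conv_orient_ge0 _ sab); exact: inV _ jW cD.
  move=> h; have : mu * cross (vsub b a) (dd W j) < 0.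
    by apply: le_lt_trans h; rewrite /dd lerDr.
  by rewrite nmulr_rlt0.
Qed.

Lemma verify_ok fuel : forall i j h, (0 < i)%N -> (j < size W)%N -> C (wp W i.-1) -> C (wp W j) ->
  (j - i < fuel)%N -> (j - i <= 2 ^ h)%N ->
  let (r, Q) := verify fuel O W i j in
  (r = AllIn /\ (forall t, (i.-1 <= t)%N -> (t <= j)%N -> C (wp W t)) /\
     (size Q <= 7 * h * rcount i j + 1)%N) \/
  (exists p, [/\ r = Witness p, p \in P, ~ C p & (size Q <= 7 * h * rcount i j + 4 * h + 3)%N]).
Proof.
elim: fuel => [|f IH] i j h i0 jW cA cD hf hh; first by rewrite ltn0 in hf.
rewrite /= -[nth (0, 0) W]/(wp W).
case: ifP => [ji|/negbT].
  left; split => //; split => //.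
  move=> t t1 t2; have [->|n1] := eqVneq t i.-1; first done.
  by have -> : t = j by lia.
rewrite -ltnNge => ij.
set q := meet _ _ _ _.
set m := (i + j)./2.
have mi : (i <= m)%N by rewrite /m; lia.
have mj : (m < j)%N by rewrite /m; lia.
have m0 : (0 < m)%N by lia.
have mW : (m < size W)%N by lia.
have m1W : (m.-1 < size W)%N by lia.
case hq: (mem_of O q).
  left; split => //; split; last by rewrite /= leq_addl.
  move=> t t1 t2; have [->|n1] := eqVneq t i.-1; first done.
  have [->|n2] := eqVneq t j; first done.
  apply: (leaf_in cvC ch i0 ij jW cA cD (mem_of_in hq)); lia.
have nq := mem_of_out hq.
case hx: (mem_of O (wp W m.-1)) => /=; last first.
  right; exists (wp W m.-1); split => //; [exact: WP | exact: mem_of_out hx | lia].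
case hy: (mem_of O (wp W m)) => /=; last first.
  right; exists (wp W m); split => //; [exact: WP | exact: mem_of_out hy | lia].
have cx := mem_of_in hx; have cy := mem_of_in hy.
have ij2 : (i.+1 < j)%N.
  rewrite ltn_neqAle ij andbT; apply/negP => /eqP ej.
  have hm : m = i by rewrite /m -ej; lia.
  move: hq; rewrite /q -ej q_consec //; last by rewrite ej.
  by move: hy; rewrite hm => ->.
case: h hh => [|h'] hh; first by rewrite expn0 in hh; lia.
have b1 : (m - i <= 2 ^ h')%N by move: hh; rewrite expnS /m; lia.
have b2 : (j - m <= 2 ^ h')%N by move: hh; rewrite expnS /m; lia.
have IH1 := IH i m h' i0 mW cA cy (ltac:(lia)) b1.
have rs := rcount_split mi (ltnW mj).
case E1: (verify f O W i m) IH1 => [r1 Q1] IH1.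
case: IH1 => [[-> [ch1 s1]] | [p [-> pP pC s1]]]; last first.
  right; exists p; split => //=.
  move: s1 rs; set r1c := rcount i m; set r2c := rcount m j; set rc := rcount i j => s1 rs.
  nia.
have IH2 := IH m j h' m0 jW cx cD (ltac:(lia)) b2.
case E2: (verify f O W m j) IH2 => [r2 Q2] IH2.
case: IH2 => [[-> [ch2 s2]] | [p [-> pP pC s2]]]; last first.
  right; exists p; split => //=.
  move: s1 s2 rs; rewrite size_cat.
  set r1c := rcount i m; set r2c := rcount m j; set rc := rcount i j => s1 s2 rs.
  nia.
have chall : forall t, (i.-1 <= t)%N -> (t <= j)%N -> C (wp W t).
  move=> t t1 t2; have [tm|tm] := leqP t m; first exact: ch1.
  by apply: ch2 => //; lia.
left; split => //; split => //=.
have rp := rcount_pos i0 ij jW erefl nq cA (chall i (leq_pred i) (ltnW ij)) cD.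
move: s1 s2 rs rp; rewrite size_cat.
set r1c := rcount i m; set r2c := rcount m j; set rc := rcount i j => s1 s2 rs rp.
nia.
Qed.

End S7.
Section S8.
Variable R : realType.
Local Notation pt := (R * R)%type.

Lemma check_list_ok (C : set pt) O (s : seq pt) : sep_oracle C O ->
  let (r, Q) := check_list O s in
  [/\ (size Q <= size s)%N, (r = None -> forall x, x \in s -> C x) &
      (forall p, r = Some p -> p \in s /\ ~ C p)].
Proof.
move=> hO; elim: s => [|x s IH] /=; first by split.
case hx: (mem_of O x); last first.
  split; [by [] | by [] | ].
  by move=> p [<-]; split; [rewrite mem_head | exact: mem_of_out hx].
case: (check_list O s) IH => [r Q] [h1 h2 h3]; split => //.
- by move=> e y; rewrite in_cons => /orP[/eqP->|/h2]; [exact: mem_of_in hx|apply].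
- by move=> p /h3 [ps pc]; rewrite in_cons ps orbT.
Qed.

Lemma hull_out (C : set pt) O (P : seq pt) p : sep_oracle C O -> p \in P -> ~ C p ->
  exists a, [/\ hull_vertex P a & ~ C a].
Proof.
move=> hO pP np.
have := hO p; case hp: (O p) => [[[u1 u2] c]|]; last by [].
move=> [u0 [hlt hall]].
have Pn : P != [::] by case: (P) pP.
pose f (z : pt) := u1 * z.1 + u2 * z.2.
pose g (z : pt) := - u2 * z.1 + u1 * z.2.
have [M MP Mmax] := argmax_seq f Pn.
pose T := [seq z <- P | f z == f M].
have Tn : T != [::].
  apply/negP => /eqP hT; have : M \in T by rewrite mem_filter eqxx MP.
  by rewrite hT.
have [a aT amax] := argmax_seq g Tn.
move: aT; rewrite mem_filter => /andP[/eqP fa aP].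
exists a; split; last first.
  move=> ca; have := hall a ca; rewrite -/(f a) fa.
  by have := Mmax p pP; rewrite /f => h1 h2; move: hlt; rewrite ltNge (le_trans h1 h2).
split => //.
apply: (@lex_extreme R _ _ u1 u2 (- u2) u1) => x.
rewrite mem_filter => /andP[xa xP].
have fx := Mmax x xP; rewrite -fa in fx.
move: fx; rewrite le_eqVlt => /orP[/eqP e|l]; last by left.
right; split => //.
have gx : g x <= g a by apply: amax; rewrite mem_filter /= e fa eqxx xP.
move: gx; rewrite le_eqVlt => /orP[/eqP e2|//].
exfalso; move/negP: xa; apply.
have uu : u1 * u1 + u2 * u2 != 0.
  apply/negP => /eqP h0; have [e1 e3] := sqr_sum_eq0 h0.
  by move: u0; rewrite e1 e3 eqxx.
move: e e2; rewrite /f /g => e e2.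
have dx : (u1 * u1 + u2 * u2) * (x.1 - a.1) = 0.
  transitivity (u1 * (u1 * x.1 + u2 * x.2 - (u1 * a.1 + u2 * a.2)) - u2 * (- u2 * x.1 + u1 * x.2 - (- u2 * a.1 + u1 * a.2))).
    by ring.
  by rewrite e e2 !subrr !mulr0 subrr.
have dy : (u1 * u1 + u2 * u2) * (x.2 - a.2) = 0.
  transitivity (u2 * (u1 * x.1 + u2 * x.2 - (u1 * a.1 + u2 * a.2)) + u1 * (- u2 * x.1 + u1 * x.2 - (- u2 * a.1 + u1 * a.2))).
    by ring.
  by rewrite e e2 !subrr !mulr0 addr0.
move/eqP: dx; rewrite mulf_eq0 (negPf uu) /= subr_eq0 => /eqP e1.
move/eqP: dy; rewrite mulf_eq0 (negPf uu) /= subr_eq0 => /eqP e3.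
by rewrite [x]surjective_pairing [a]surjective_pairing e1 e3.
Qed.

Lemma nth_in_P (P U : seq pt) v t : v \in P -> (forall s, (s < size U)%N -> wp U s \in P) ->
  nth v U t \in P.
Proof.
move=> vP UP; have [lt|ge] := ltnP t (size U).
  by rewrite (set_nth_default (0,0)) //; exact: UP.
by rewrite nth_default.
Qed.

Lemma sorted_uniq_lex (U : seq pt) : sorted (@lex_lt R) U -> uniq U.
Proof.
move=> hs; exact: (@sorted_uniq _ (@lex_lt R) (@lex_lt_trans R) (@lex_lt_irr R) U hs).
Qed.

End S8.

Lemma sorted_uniq_lex_rev (R : realType) (U : seq (R * R)) : sorted (fun p q => @lex_lt R q p) U -> uniq U.
Proof.
move=> hs.
have tr : transitive (fun p q : R * R => lex_lt q p).
  by move=> x y z h1 h2; exact: lex_lt_trans h2 h1.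
have ir : irreflexive (fun p q : R * R => lex_lt q p) by move=> x; exact: lex_lt_irr.
exact: (@sorted_uniq _ _ tr ir U hs).
Qed.
Theorem lemma4p4 :
  exists c : nat, forall (R : realType) (C : set (R * R)%type)
    (O : (R * R)%type -> option (R * R * R)) (P : seq (R * R)%type)
    (v v' : (R * R)%type) (U L : seq (R * R)%type) (k : nat),
    convex_body C -> sep_oracle C O -> uniq P ->
    lexmin_of P v -> lexmax_of P v' ->
    upper_chain P v v' U -> lower_chain P v v' L ->
    inner_fence_size C P k ->
    let (r, Q) := classify O v v' U L in
    ((r = AllIn /\ forall p, p \in P -> C p) \/
     (exists p, r = Witness p /\ p \in P /\ ~ C p)) /\
    (size Q <= c * k.+1 * (trunc_log 2 (size P)).+1)%N.
Proof.
exists 26%N => R C O P v v' U L k [cvC _ _] hO uP hv hv' hU hL [[V [hV sV]] _].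
have [chU U0 U1 Us UP] := upper_props hv hv' hU.
have [chL L0 L1 Ls LP] := lower_props hv hv' hL.
set T := trunc_log 2 (size P).
have PT : (size P < 2 ^ T.+1)%N by apply: trunc_log_ltn.
have sUP : (size U <= size P)%N.
  apply: uniq_leq_size; first exact: sorted_uniq_lex hU.1.
  by move=> x /(hU.2 x) [[]].
have sLP : (size L <= size P)%N.
  apply: uniq_leq_size; first exact: sorted_uniq_lex_rev hL.1.
  by move=> x /(hL.2 x) [[]].
rewrite /classify.
set six := [:: v; _; _; _; _; _].
have CL := @check_list_ok R C O six hO.
case: (check_list O six) CL => [r0 Q0] [s0 hn hs].
case: r0 hn hs => [p|] hn hs.
  split; last first.
    apply: leq_trans s0 _; rewrite /six /=; nia.
  right; exists p; have [ps pc] := hs p erefl; split => //; split => //.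
  have vP := hv.1; have v'P := hv'.1.
  move: ps; rewrite /six !inE => /or4P[/eqP->|/eqP->|/eqP->|/or3P[/eqP->|/eqP->|/eqP->]] //;
    exact: nth_in_P.
have all6 := hn erefl.
have cv : C v by apply: all6; rewrite mem_head.
have cv' : C v' by apply: all6; rewrite /six !inE eqxx !orbT.
have cU0 : C (wp U 0) by rewrite U0.
have cU1 : C (wp U (size U).-1) by rewrite U1.
have cL0 : C (wp L 0) by rewrite L0.
have cL1 : C (wp L (size L).-1) by rewrite L1.
have rcU : (rcount U V 1 (size U).-1 <= k)%N by rewrite -sV count_size.
have rcL : (rcount L V 1 (size L).-1 <= k)%N by rewrite -sV count_size.
have VU := @verify_ok R C O U P V hO cvC chU UP hV (size U) 1 (size U).-1 T.+1 isT
   (ltac:(lia)) cU0 cU1 (ltac:(lia)) (ltac:(lia)).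
rewrite /verify_chain.
case: (verify (size U) O U 1 (size U).-1) VU => [r1 Q1] VU.
move: rcU rcL VU; set a1 := rcount U V _ _; set a2 := rcount L V _ _ => rcU rcL VU.
case: VU => [[-> [chU' s1]] | [p [-> pP pC s1]]]; last first.
  split; first by right; exists p.
  rewrite size_cat; move: s0; rewrite /six /= => s0; nia.
have VL := @verify_ok R C O L P V hO cvC chL LP hV (size L) 1 (size L).-1 T.+1 isT
   (ltac:(lia)) cL0 cL1 (ltac:(lia)) (ltac:(lia)).
case: (verify (size L) O L 1 (size L).-1) VL => [r2 Q2] VL.
move: VL; rewrite -/a2 => VL.
case: VL => [[-> [chL' s2]] | [p [-> pP pC s2]]]; last first.
  split; first by right; exists p.
  rewrite !size_cat; move: s0; rewrite /six /= => s0; nia.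
split; last by rewrite !size_cat; move: s0; rewrite /six /= => s0; nia.
left; split => // p pP.
case: (pselect (C p)) => // np; exfalso.
have [a [ha na]] := hull_out hO pP np.
have [ho|ho] := leP 0 (orient v v' a).
  have aU : a \in U by apply/(hU.2 a).
  have ia : (index a U < size U)%N by rewrite index_mem.
  apply: na; rewrite -(nth_index (0,0) aU); apply: chU' => //.
  by rewrite -ltnS (ltn_predK ia) index_mem.
have aL : a \in L by apply/(hL.2 a); split => //; exact: ltW.
have ia : (index a L < size L)%N by rewrite index_mem.
apply: na; rewrite -(nth_index (0,0) aL); apply: chL' => //.
by rewrite -ltnS (ltn_predK ia) index_mem.
Qed.
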